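(* Let $H$ be an $r$-graph. If $H$ contains a $2$-locally large subgraph, then $H$ is $2$-locally large.
   Context: An $r$-graph is an $r$-uniform hypergraph. Let $H$ be an $r$-graph on $m$ vertices and $\sigma:V(H)\to[m]$ a bijection. For $x\in V(H)$ and $1\le i\le r$, $T_x^i$ is the set of edges $e\ni x$ such that $\sigma(x)$ is the $i$-th smallest of the values $\sigma(v)$, $v\in e$. For $r+1\le i\le 2r+1$, $T_x^i$ is the set of edges $e\not\ni x$ such that $\sigma(x)$ is the $(i-r)$-th smallest among the values $\sigma(v)$, $v\in e\cup\{x\}$. $H$ is $2$-locally large if there exists a bijection $\sigma:V(H)\to[m]$ such that for every vertex $x\in V(H)$ some $T_x^i$, $i\in[2r+1]$, contains at least two edges. *)

(* Defs.v *)
From mathcomp Require Import all_boot.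
Set Implicit Arguments. Unset Strict Implicit. Unset Printing Implicit Defensive.

Definition is_rgraph (V : finType) (r : nat) (VH : {set V}) (E : {set {set V}}) : Prop :=
  forall e, e \in E -> e \subset VH /\ #|e| = r.

Definition is_subgraph (V : finType) (r : nat) (VH' : {set V}) (E' : {set {set V}})
  (VH : {set V}) (E : {set {set V}}) : Prop :=
  is_rgraph r VH' E' /\ VH' \subset VH /\ E' \subset E.

(* sigma : V(H) -> [m] is a bijection, m = |V(H)|, [m] = {1,...,m}. *)
Definition is_labelling (V : finType) (VH : {set V}) (sigma : V -> nat) : Prop :=
  {in VH &, injective sigma} /\ (forall x, x \in VH -> 1 <= sigma x <= #|VH|).

Definition below (V : finType) (sigma : V -> nat) (e : {set V}) (x : V) : nat :=
  #|[set v in e | sigma v < sigma x]|.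

(* T_x^i, 1 <= i <= 2r+1.  For i <= r: edges e containing x in which sigma x is
   the i-th smallest (i.e. exactly i-1 vertices of e are below x).
   For r+1 <= i <= 2r+1: edges e not containing x such that sigma x is the
   (i-r)-th smallest of e ∪ {x} (i.e. exactly i-r-1 vertices of e are below x). *)
Definition T (V : finType) (r : nat) (E : {set {set V}}) (sigma : V -> nat) (x : V) (i : nat)
  : {set {set V}} :=
  if i <= r then [set e in E | (x \in e) && (below sigma e x == i - 1)]
  else [set e in E | (x \notin e) && (below sigma e x == i - r - 1)].

Definition two_locally_large (V : finType) (r : nat) (VH : {set V}) (E : {set {set V}}) : Prop :=
  exists sigma : V -> nat, is_labelling VH sigma /\
    forall x, x \in VH -> exists i, 1 <= i <= 2 * r + 1 /\ 2 <= #|T r E sigma x i|.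

(* Main.v *)
Require Import Defs.
From mathcomp Require Import all_boot.
From mathcomp Require Import zify.
From Stdlib Require Import Lia.

Lemma T_sub (V : finType) (r : nat) (E : {set {set V}}) (sigma : V -> nat) x i :
  T r E sigma x i \subset E.
Proof.
rewrite /T; case: ifP => _; apply/subsetP => e; rewrite inE => /andP[] //.
Qed.

Theorem proposition2 (V : finType) (r : nat) (VH : {set V}) (E : {set {set V}}) :
  is_rgraph r VH E ->
  (exists (VH' : {set V}) (E' : {set {set V}}),
      is_subgraph r VH' E' VH E /\ VH' != set0 /\ two_locally_large r VH' E') ->
  two_locally_large r VH E.
Proof.
move=> _ [VH' [E' [[HE' [sub1 sub2]] [ne [s' [[inj' rng'] L']]]]]].
set D := VH :\: VH'.
pose s v := if v \in VH' then s' v else #|VH'| + 1 + index v (enum D).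
have sE v : v \in VH' -> s v = s' v by rewrite /s => ->.
have cardD : #|VH| = #|VH'| + #|D|.
  by rewrite /D cardsD (setIidPr sub1) subnKC // subset_leq_card.
have sD v : v \in D -> #|VH'| < s v /\ s v <= #|VH|.
  move=> vD; have := vD; rewrite /D inE => /andP[/negbTE nv _].
  rewrite /s nv; split; first lia.
  have : index v (enum D) < #|D| by rewrite cardE index_mem mem_enum.
  lia.
have E'2 : 2 <= #|E'|.
  case/set0Pn: ne => y yin; case: (L' y yin) => i [_ h].
  by apply: leq_trans h _; apply: subset_leq_card; apply: T_sub.
have belowE e x : e \in E' -> x \in VH' -> below s e x = below s' e x.
  move=> eE xin; rewrite /below; apply: eq_card => v; rewrite !inE.
  case ve: (v \in e) => //=; have [/subsetP es _] := HE' e eE.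
  by rewrite !sE // es.
exists s; split.
  split.
    move=> u v uin vin.
    case uV: (u \in VH'); case vV: (v \in VH').
    - by rewrite !sE //; apply: inj'.
    - have vD : v \in D by rewrite /D inE vV.
      have := sD v vD; have := rng' u uV; rewrite (sE u) // => h1 h2 h3; exfalso; lia.
    - have uD : u \in D by rewrite /D inE uV.
      have := sD u uD; have := rng' v vV; rewrite (sE v) // => h1 h2 h3; exfalso; lia.
    - rewrite /s uV vV => /eqP; rewrite eqn_add2l => /eqP h.
      have uD : u \in D by rewrite /D inE uV.
      have vD : v \in D by rewrite /D inE vV.
      have uE : u \in enum D by rewrite mem_enum.
      have vE : v \in enum D by rewrite mem_enum.
      by rewrite -(nth_index u uE) h nth_index.
  move=> x xin; case xV: (x \in VH').
    by rewrite sE //; have := rng' x xV; rewrite cardD; lia.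
  have xD : x \in D by rewrite /D inE xV xin.
  by have := sD x xD; lia.
move=> x xin; case xV: (x \in VH').
  case: (L' x xV) => i [hi h]; exists i; split => //.
  apply: leq_trans h _; apply: subset_leq_card; apply/subsetP => e.
  rewrite /T; case: ifP => _; rewrite !inE => /andP[eE hh];
    by rewrite (subsetP sub2 _ eE) /= belowE.
have xD : x \in D by rewrite /D inE xV.
exists (2 * r + 1); split; first lia.
apply: leq_trans E'2 _; apply: subset_leq_card; apply/subsetP => e eE.
have [/subsetP esub er] := HE' e eE.
rewrite /T ifF; last lia.
rewrite inE (subsetP sub2 _ eE) /=; apply/andP; split.
  by apply/negP => /esub; rewrite xV.
have -> : 2 * r + 1 - r - 1 = r by lia.
rewrite /below -er; apply/eqP; apply: eq_card => v; rewrite inE.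
case ve: (v \in e) => //=; have vV := esub v ve.
by have := rng' v vV; have := sD x xD; rewrite (sE v) //; lia.
Qed.
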